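(* Let $m\equiv n\equiv 0\pmod 3$, $u\equiv 2,4\pmod 6$, $v=2m+2n+u$, $c<\binom u3$, and let $(u,c)$ satisfy (C2) with associated pair $(\lambda,\delta)$. Suppose (i) $(V,\mathcal A)$ is a simple NGDD$(2,3,v)$ of type $2^{(m,n)}u^1$ with size-2 groups $G_1,\dots,G_{m+n}$ and group $U$ of size $u$; (ii) $(V,\mathcal B)$ is a simple GDD$_{\lambda-1}(2,3,v)$ of type $1^{2m+2n}u^1$ with long group $U$; and (iii) $(U,\mathcal C)$ is an NWBTS$(u;c)$. If $\mathcal A,\mathcal B,\mathcal C$ are pairwise disjoint, then $\mathcal F=\mathcal A\cup\mathcal B\cup\mathcal C$ is the block set of an NWBTS$(v;|\mathcal F|)$, where $3|\mathcal F|=\lambda\binom v2+m-n+\delta$.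
   Context: NGDD$(2,3,v)$ of type $2^{(m,n)}u^1$: $V$ is a set of $v=2(m+n)+u$ points partitioned into groups $G_1,\dots,G_{m+n}$ of size 2 and $U$ of size $u$; a set of triples on $V$ such that each pair $G_i$ with $1\le i\le m$ lies in exactly two blocks, each pair in $\binom U2\cup\{G_i:m<i\le m+n\}$ lies in no block, and every other pair of $V$ lies in exactly one block. A GDD$_\mu(2,3,v)$ of type $1^{v-u}u^1$ with long group $U$: triples on $V$, none containing two points of $U$, every pair not inside $U$ in exactly $\mu$ blocks. Simple: no repeated blocks. A triple system TS$(v;b)$ is a pair $(V,\mathcal F)$, $V$ a set of $v\ge3$ points, $\mathcal F$ a multiset of $b$ 3-subsets (blocks). $\lambda_{x_1,\dots,x_j}$ is the number of blocks containing $\{x_1,\dots,x_j\}$; $j$-balanced means $|\lambda_{x_1,\dots,x_j}-\lambda_{y_1,\dots,y_j}|\le1$ for all $j$-subsets. Associated pair $(\lambda,\varepsilon)$ of $(v,b)$: $3b=\lambda\binom v2+\varepsilon$, $-v/2<\varepsilon<v/2$. (C2): $v$ even and $\lambda v(v-1)/6-v/6<b<\lambda v(v-1)/6+v/6$ for odd $\lambda$ (the $\lambda$ of the associated pair). Defect graph (when all $\lambda_{x,y}\in\{\lambda-1,\lambda,\lambda+1\}$): graph on $V$ with edges of pairs with $\lambda_{x,y}=\lambda+1$ (label $+1$) or $\lambda-1$ (label $-1$); isomorphisms preserve labels. $H^0_{v,\varepsilon}$: perfect matching with $(v+2\varepsilon)/4$ edges $+1$, $(v-2\varepsilon)/4$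 edges $-1$; $H^1_{v,\varepsilon}$: disjoint union of a $K_{1,3}$ with two $+1$ and one $-1$ edge and a matching of the other $v-4$ vertices with $(v-6+2\varepsilon)/4$ edges $+1$, $(v-2-2\varepsilon)/4$ edges $-1$; $H^2_{v,\varepsilon}$: disjoint union of a $K_{1,3}$ with one $+1$ and two $-1$ edges and a matching of the other $v-4$ vertices with $(v-2+2\varepsilon)/4$ edges $+1$, $(v-6-2\varepsilon)/4$ edges $-1$. Under (C2) a TS is nearly 2-balanced if all $\lambda_{x,y}\in\{\lambda-1,\lambda,\lambda+1\}$ and its defect graph is $\cong H^0_{v,\varepsilon}$ when $\varepsilon\equiv v/2\pmod 2$, and $\cong H^1_{v,\varepsilon}$ or $H^2_{v,\varepsilon}$ otherwise. An NWBTS is a nearly 2-balanced, 3-balanced TS. *)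

(* Defs.v *)
From mathcomp Require Import all_boot all_order all_algebra.
Set Implicit Arguments. Unset Strict Implicit. Unset Printing Implicit Defensive.
Import Order.TTheory GRing.Theory Num.Theory.
Local Open Scope ring_scope.

Section TripleSystems.
Variable T : finType.

(* Blocks are given as a list (multiset) of subsets of T. *)
Definition lam (F : seq {set T}) (S : {set T}) : nat :=
  count (fun X : {set T} => S \subset X) F.

Definition is_TS (P : {set T}) (F : seq {set T}) : Prop :=
  (3 <= #|P|)%N /\ forall X, X \in F -> X \subset P /\ #|X| = 3%N.

Definition jbalanced (P : {set T}) (F : seq {set T}) (j : nat) : Prop :=
  forall S1 S2 : {set T}, S1 \subset P -> S2 \subset P ->
    #|S1| = j -> #|S2| = j -> (lam F S1 <= lam F S2 + 1)%N.

Definition assoc_pair (v b lam0 : nat) (eps : int) : Prop :=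
  (3 * b)%:Z = (lam0 * 'C(v, 2))%:Z + eps /\
  - (v%:Z) < 2 * eps /\ 2 * eps < v%:Z.

Definition C2 (v b lam0 : nat) (eps : int) : Prop :=
  ~~ odd v /\ odd lam0 /\ assoc_pair v b lam0 eps.

(* Concrete labelled graphs H^k_{v,eps} on vertex set {0,...,v-1}:
   label +1 / -1 for edges, 0 for non-edges. *)
Definition Hlab (k v : nat) (e : int) (i j : nat) : int :=
  let a := minn i j in let b := maxn i j in
  if a == b then 0 else
  match k with
  | 0%N => (* perfect matching {2p, 2p+1}, first (v+2e)/4 pairs +1, rest -1 *)
      if a./2 == b./2 then
        (if (a./2)%:Z < ((v%:Z + 2 * e) %/ 4)%Z then 1 else -1)
      else 0
  | 1%N => (* K_{1,3}: centre 0, edges 01,02 (+1), 03 (-1);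
              matching on 4..v-1, first (v-6+2e)/4 pairs +1, rest -1 *)
      if a == 0%N then
        (if (b == 1%N) || (b == 2%N) then 1 else if b == 3%N then -1 else 0)
      else if (4 <= a)%N && (a./2 == b./2) then
        (if ((a./2 - 2)%N)%:Z < ((v%:Z - 6 + 2 * e) %/ 4)%Z then 1 else -1)
      else 0
  | _ => (* K_{1,3}: centre 0, edge 01 (+1), 02,03 (-1);
            matching on 4..v-1, first (v-2+2e)/4 pairs +1, rest -1 *)
      if a == 0%N then
        (if b == 1%N then 1 else if (b == 2%N) || (b == 3%N) then -1 else 0)
      else if (4 <= a)%N && (a./2 == b./2) then
        (if ((a./2 - 2)%N)%:Z < ((v%:Z - 2 + 2 * e) %/ 4)%Z then 1 else -1)
      else 0
  end.

(* H^k_{v,eps} exists: edge counts are nonnegative integers *)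
Definition Hwf (k v : nat) (e : int) : Prop :=
  match k with
  | 0%N => (4 %| v%:Z + 2 * e)%Z /\ 0 <= v%:Z + 2 * e /\ 0 <= v%:Z - 2 * e
  | 1%N => (4 %| v%:Z - 6 + 2 * e)%Z /\ 0 <= v%:Z - 6 + 2 * e /\ 0 <= v%:Z - 2 - 2 * e
  | _ => (4 %| v%:Z - 2 + 2 * e)%Z /\ 0 <= v%:Z - 2 + 2 * e /\ 0 <= v%:Z - 6 - 2 * e
  end.

Definition defect_iso (P : {set T}) (F : seq {set T}) (lam0 k : nat) (e : int)
  : Prop :=
  Hwf k #|P| e /\
  exists f : T -> 'I_#|P|, {in P &, injective f} /\
    forall x y, x \in P -> y \in P -> x != y ->
      (lam F [set x; y])%:Z - lam0%:Z = Hlab k #|P| e (f x) (f y).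

Definition nearly2balanced (P : {set T}) (F : seq {set T}) : Prop :=
  exists (lam0 : nat) (eps : int),
    C2 #|P| (size F) lam0 eps /\
    (forall x y, x \in P -> y \in P -> x != y ->
       (lam0 <= lam F [set x; y] + 1 /\ lam F [set x; y] <= lam0 + 1)%N) /\
    (if (eps == (#|P|./2)%:Z %[mod 2])%Z
     then defect_iso P F lam0 0 eps
     else defect_iso P F lam0 1 eps \/ defect_iso P F lam0 2 eps).

Definition NWBTS (P : {set T}) (b : nat) (F : seq {set T}) : Prop :=
  is_TS P F /\ size F = b /\ nearly2balanced P F /\ jbalanced P F 3.

Definition NGDD (m n : nat) (U : {set T}) (G : 'I_(m + n) -> {set T})
  (A : seq {set T}) : Prop :=
  uniq A /\ (forall X, X \in A -> #|X| = 3%N) /\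
  forall x y : T, x != y ->
    lam A [set x; y] =
      if [exists i : 'I_(m + n), ([set x; y] == G i) && (i < m)%N] then 2%N
      else if ((x \in U) && (y \in U)) ||
              [exists i : 'I_(m + n), ([set x; y] == G i) && (m <= i)%N]
      then 0%N else 1%N.

Definition GDD (U : {set T}) (mu : nat) (B : seq {set T}) : Prop :=
  uniq B /\ (forall X, X \in B -> #|X| = 3%N /\ (#|X :&: U| <= 1)%N) /\
  forall x y : T, x != y -> ~~ ((x \in U) && (y \in U)) ->
    lam B [set x; y] = mu.

End TripleSystems.

Arguments NGDD {T} m n U G A.
Arguments lam {T} F S.
Arguments is_TS {T} P F.
Arguments jbalanced {T} P F j.
Arguments defect_iso {T} P F lam0 k e.
Arguments nearly2balanced {T} P F.
Arguments NWBTS {T} P b F.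
Arguments GDD {T} U mu B.

(* Main.v *)
Require Import Defs.
From mathcomp Require Import all_boot all_order all_algebra.
From mathcomp Require Import zify.
Import Order.TTheory GRing.Theory Num.Theory.
Local Open Scope ring_scope.


Definition numer (k u : nat) (d : int) : int :=
  match k with 0%N => u%:Z + 2 * d | 1%N => u%:Z - 6 + 2 * d | _ => u%:Z - 2 + 2 * d end.

Lemma div4 (x : int) (P : nat) : x = 4 * P%:Z -> (x %/ 4)%Z = P%:Z.
Proof. move=> ->. by rewrite mulrC mulzK. Qed.

Definition tk k P := (2 * P + (if k is 0 then 0 else 4))%N.

Lemma Hlab_UG k u d m n (P : nat) j i (b : bool) :
  numer k u d = 4 * P%:Z -> (tk k P <= u)%N -> (u %% 2 = 0)%N -> (j < u)%N ->
  Hlab k (u + 2 * (m+n)) (m%:Z - n%:Z + d)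
    (if (j < tk k P)%N then j else (j + 2 * m)%N)
    ((if (i < m)%N then tk k P + 2 * i else u + 2 * i) + b)%N = 0.
Proof.
rewrite /tk; move=> hN htu hu hj.
case: k hN htu => [|[|k]] /= hN htu; rewrite /Hlab.
- rewrite (@div4 _ (P + m)%N); last by move: hN; lia.
  case: ltnP => ?; case: ltnP => ?; case: b;
  repeat (case: ifP => ?); lia.
- rewrite (@div4 _ (P + m)%N); last by move: hN; lia.
  case: ltnP => ?; case: ltnP => ?; case: b;
  repeat (case: ifP => ?); lia.
- rewrite (@div4 _ (P + m)%N); last by move: hN; lia.
  case: ltnP => ?; case: ltnP => ?; case: b;
  repeat (case: ifP => ?); lia.
Qed.

Lemma Hlab_GG k u d m n (P : nat) i :
  numer k u d = 4 * P%:Z -> (tk k P <= u)%N -> (u %% 2 = 0)%N ->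
  Hlab k (u + 2 * (m+n)) (m%:Z - n%:Z + d)
    ((if (i < m)%N then tk k P + 2 * i else u + 2 * i) + false)%N
    ((if (i < m)%N then tk k P + 2 * i else u + 2 * i) + true)%N
  = if (i < m)%N then 1 else -1.
Proof.
rewrite /tk; move=> hN htu hu.
case: k hN htu => [|[|k]] /= hN htu; rewrite /Hlab.
- rewrite (@div4 _ (P + m)%N); last by move: hN; lia.
  case: ltnP => ?; repeat (case: ifP => ?); lia.
- rewrite (@div4 _ (P + m)%N); last by move: hN; lia.
  case: ltnP => ?; repeat (case: ifP => ?); lia.
- rewrite (@div4 _ (P + m)%N); last by move: hN; lia.
  case: ltnP => ?; repeat (case: ifP => ?); lia.
Qed.

Lemma Hlab_GG' k u d m n (P : nat) i i' (b b' : bool) :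
  numer k u d = 4 * P%:Z -> (tk k P <= u)%N -> (u %% 2 = 0)%N -> i <> i' ->
  Hlab k (u + 2 * (m+n)) (m%:Z - n%:Z + d)
    ((if (i < m)%N then tk k P + 2 * i else u + 2 * i) + b)%N
    ((if (i' < m)%N then tk k P + 2 * i' else u + 2 * i') + b')%N
  = 0.
Proof.
rewrite /tk; move=> hN htu hu hii.
case: k hN htu => [|[|k]] /= hN htu; rewrite /Hlab.
- rewrite (@div4 _ (P + m)%N); last by move: hN; lia.
  case: ltnP => ?; case: ltnP => ?; case: b; case: b'; repeat (case: ifP => ?); lia.
- rewrite (@div4 _ (P + m)%N); last by move: hN; lia.
  case: ltnP => ?; case: ltnP => ?; case: b; case: b'; repeat (case: ifP => ?); lia.
- rewrite (@div4 _ (P + m)%N); last by move: hN; lia.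
  case: ltnP => ?; case: ltnP => ?; case: b; case: b'; repeat (case: ifP => ?); lia.
Qed.

Lemma Hlab_range k v e i j : Hlab k v e i j = 0 \/ Hlab k v e i j = 1 \/ Hlab k v e i j = -1.
Proof. rewrite /Hlab; case: k => [|[|k]]; repeat (case: ifP => _); auto. Qed.

Lemma Hlab_sym k v e i j : Hlab k v e i j = Hlab k v e j i.
Proof. by rewrite /Hlab minnC maxnC. Qed.

Lemma lam_cat (T : finType) (L1 L2 : seq {set T}) (S : {set T}) : lam (L1 ++ L2) S = (lam L1 S + lam L2 S)%N.
Proof. by rewrite /lam count_cat. Qed.

Lemma pairG (T : finType) (x y : T) (G : {set T}) : x != y -> #|G| = 2%N ->
  ([set x; y] == G) = (x \in G) && (y \in G).
Proof.
move=> xy hG; apply/eqP/andP => [<-|[xG yG]]; first by rewrite !inE !eqxx orbT.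
apply/eqP; rewrite eqEcard cards2 xy hG leqnn andbT.
by apply/subsetP => z; rewrite !inE => /orP[] /eqP ->.
Qed.

Lemma lam_le1 (T : finType) (L : seq {set T}) (S : {set T}) : uniq L -> (forall X, X \in L -> #|X| = 3%N) ->
  #|S| = 3%N -> (lam L S <= 1)%N.
Proof.
move=> uL hL hS; rewrite /lam (@eq_in_count _ _ (pred1 S)); last first.
  move=> X XL /=; apply/idP/eqP => [sub|->]; last by [].
  by apply/eqP; rewrite eq_sym eqEcard sub hL // hS.
by rewrite count_uniq_mem //; case: (_ \in _).
Qed.

Lemma lam_mono (T : finType) (L : seq {set T}) (S S' : {set T}) : S' \subset S -> (lam L S <= lam L S')%N.
Proof. move=> sub; apply: sub_count => X /= SX; exact: subset_trans SX. Qed.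

Lemma dcount (T : finType) (P : {set T}) (L : seq {set T}) :
  (forall X, X \in L -> X \subset P /\ #|X| = 3%N) ->
  (\sum_(p in [set p : {set T} | (p \subset P) && (#|p| == 2)]) lam L p = 3 * size L)%N.
Proof.
move=> hL.
have -> : (\sum_(p in [set p : {set T} | (p \subset P) && (#|p| == 2)]) lam L p =
   \sum_(p in [set p : {set T} | (p \subset P) && (#|p| == 2)]) \sum_(X <- L) (p \subset X : nat))%N.
  by apply: eq_bigr => p _; rewrite /lam -sum1_count big_mkcond.
rewrite exchange_big /= -[size L]card_ord.
rewrite big_seq_cond.
have -> : (\sum_(i <- L | (i \in L) && true) \sum_(i0 in [set p : {set T} | (p \subset P) && (#|p| == 2)]) (i0 \subset i : nat)
   = \sum_(i <- L | (i \in L) && true) 3)%N.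
  apply: eq_bigr => X /andP[XL _]; have [XP X3] := hL X XL.
  have <- : 'C(#|X|, 2) = 3%N by rewrite X3.
  rewrite -big_mkcondr /= -cards_draws -sum1_card.
  apply: eq_bigl => p; rewrite !inE; apply/idP/idP.
    by case/andP=> /andP[_ ->] ->.
  by case/andP=> pX ->; rewrite pX (subset_trans pX XP).
rewrite -big_seq_cond big_const_seq count_predT card_ord.
by rewrite iter_addn_0 mulnC.
Qed.

Lemma card_bigcup2 (T : finType) k (G : 'I_k -> {set T}) : (forall i, #|G i| = 2%N) ->
  (forall i j, i != j -> [disjoint G i & G j]) -> #|\bigcup_(i < k) G i| = (2 * k)%N.
Proof.
elim: k G => [|k IH] G h2 hd; first by rewrite big_ord0 cards0.
rewrite big_ord_recr /= cardsU IH //; last first.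
  by move=> i j ij; apply: hd; apply: contra ij => /eqP[] /val_inj ->.
rewrite h2.
have -> : (\bigcup_(i < k) G (widen_ord (leqnSn k) i)) :&: G ord_max = set0.
  apply/setP => z; rewrite !inE; apply/negbTE; apply/negP => /andP[/bigcupP[i _ zi] zm].
  have : widen_ord (leqnSn k) i != ord_max by rewrite neq_ltn /= ltn_ord.
  by move/hd/disjointFr/(_ zi); rewrite zm.
by rewrite cards0; lia.
Qed.

Lemma two_elems (T : finType) (G : {set T}) x y z : #|G| = 2%N -> x \in G -> y \in G -> z \in G ->
  x != z -> y != z -> x = y.
Proof.
move=> /eqP/cards2P[a [b [ab ->]]]; rewrite !inE.
by case/orP=> /eqP->; case/orP=> /eqP->; case/orP=> /eqP->; rewrite ?eqxx // eq_sym ?ab.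
Qed.

Lemma Hlab_shift k u d m n (P : nat) i j :
  numer k u d = 4 * P%:Z ->
  Hlab k (u + 2 * (m+n)) (m%:Z - n%:Z + d)
    (if (i < tk k P)%N then i else (i + 2 * m)%N)
    (if (j < tk k P)%N then j else (j + 2 * m)%N) = Hlab k u d i j.
Proof.
move=> hN; rewrite /tk.
case: k hN => [|[|k]] /= hN; rewrite /Hlab.
- rewrite (div4 _ _ hN) (@div4 _ (P + m)%N); last by move: hN; lia.
  case: ltnP => ?; case: ltnP => ?;
  repeat (case: ifP => ?); lia.
- rewrite (div4 _ _ hN) (@div4 _ (P + m)%N); last by move: hN; lia.
  case: ltnP => ?; case: ltnP => ?;
  repeat (case: ifP => ?); lia.
- rewrite (div4 _ _ hN) (@div4 _ (P + m)%N); last by move: hN; lia.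
  case: ltnP => ?; case: ltnP => ?;
  repeat (case: ifP => ?); lia.
Qed.

Lemma hwf_P k u d : Hwf k u d -> exists P : nat, numer k u d = 4 * P%:Z /\ (tk k P <= u)%N.
Proof. rewrite /tk; case: k => [|[|k]] /= [/dvdzP[q hq] [h1 h2]]; exists `|q|%N; split; lia. Qed.

Lemma hwf_T k u d m n : Hwf k u d -> Hwf k (u + 2 * (m+n)) (m%:Z - n%:Z + d).
Proof. case: k => [|[|k]] /= [h0 [h1 h2]]; (split; [lia|split; lia]). Qed.

Local Open Scope nat_scope.

Definition sh (t m a : nat) := if a < t then a else a + 2 * m.
Definition bs (t u m i : nat) := if i < m then t + 2 * i else u + 2 * i.

Lemma inj_UU t m a a' : sh t m a = sh t m a' -> a = a'.
Proof. rewrite /sh; case: ifP => ?; case: ifP => ?; lia. Qed.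

Lemma inj_UG t u m n a i (bb : bool) : t <= u -> a < u -> i < m + n -> sh t m a <> bs t u m i + bb.
Proof. rewrite /sh /bs; case: bb; case: ifP => ?; case: ifP => ?; lia. Qed.

Lemma inj_GG t u m n i j (bb bb' : bool) : t <= u -> i < m + n -> j < m + n ->
  bs t u m i + bb = bs t u m j + bb' -> i = j.
Proof. rewrite /bs; case: bb; case: bb'; case: ifP => ?; case: ifP => ?; lia. Qed.

Lemma lt_U t u m n a : a < u -> sh t m a < u + 2 * (m + n).
Proof. rewrite /sh; case: ifP => ?; lia. Qed.

Lemma lt_G t u m n i (bb : bool) : t <= u -> i < m + n -> bs t u m i + bb < u + 2 * (m + n).
Proof. rewrite /bs; case: bb; case: ifP => ?; lia. Qed.

Local Open Scope ring_scope.

Theorem lemma6p5 (T : finType) (m n u c lam0 : nat) (delta : int)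
  (U : {set T}) (G : 'I_(m + n) -> {set T}) (A B C : seq {set T}) :
  (3 %| m)%N -> (3 %| n)%N -> (u %% 6 = 2 \/ u %% 6 = 4)%N ->
  #|U| = u ->
  (forall i, #|G i| = 2%N) ->
  (forall i j, i != j -> [disjoint G i & G j]) ->
  (forall i, [disjoint G i & U]) ->
  U :|: \bigcup_(i < (m + n)%N) G i = [set: T] ->
  (c < 'C(u, 3))%N ->
  C2 u c lam0 delta ->
  NGDD m n U G A ->
  GDD U (lam0 - 1) B ->
  NWBTS U c C ->
  (forall X, X \in A -> X \notin B) ->
  (forall X, X \in A -> X \notin C) ->
  (forall X, X \in B -> X \notin C) ->
  NWBTS [set: T] (size (A ++ B ++ C)) (A ++ B ++ C) /\
  (3 * size (A ++ B ++ C))%:Z =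
    (lam0 * 'C(#|T|, 2))%:Z + m%:Z - n%:Z + delta.
Proof.
move=> h3m h3n hu6 hU hG2 hGd hGU hcov hcu [hue [hlo [h3c [hdl hdh]]]]
  [uA [A3 hA]] [uB [B3 hB]]
  [[hU3 hCs] [hCsz [[l' [e' [[_ [_ [h3c' [hel' heh']]]] [hrng' hiso']]]] hbal]]]
  hAB hAC hBC.
rewrite hU hCsz in h3c' hel' heh'.
have hu3 : (3 <= u)%N by rewrite -bin_gt0 (leq_ltn_trans (leq0n c) hcu).
have hK : (u <= 'C(u, 2))%N.
  case: u hu3 {hcu h3c h3c' hdl hdh hel' heh' hU hue hu6} => [|w] // hw.
  rewrite binS bin1.
  have : (0 < 'C(w, 2))%N by rewrite bin_gt0; lia.
  lia.
have ell : l' = lam0.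
  case: (ltngtP l' lam0) => // hl; exfalso; nia.
subst l'.
have ee : e' = delta by lia.
subst e'.
have hl0 : (0 < lam0)%N by case: lam0 hlo {h3c h3c' hrng' hiso' hbal hB}.
have GnU : forall i x, x \in G i -> x \notin U.
  by move=> i x xi; rewrite (disjointFr (hGU i) xi).
have Guniq : forall i j x, x \in G i -> x \in G j -> i = j.
  move=> i j x xi xj; case: (eqVneq i j) => // ij.
  by rewrite (disjointFr (hGd i j ij) xi) in xj.
have Gcov : forall x, x \notin U -> exists i, x \in G i.
  move=> x xU; have : x \in U :|: \bigcup_(i < (m + n)%N) G i by rewrite hcov inE.
  by rewrite inE (negbTE xU) /= => /bigcupP[i _ xi]; exists i.
have hT : #|T| = (u + 2 * (m + n))%N.
  have e : ~: U = \bigcup_(i < (m + n)%N) G i.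
    apply/setP => x; rewrite inE; apply/idP/idP => [xU|/bigcupP[i _ xi]].
      by have [i xi] := Gcov x xU; apply/bigcupP; exists i.
    exact: GnU xi.
  by rewrite -(cardsC U) e card_bigcup2 // hU.
pose F := A ++ B ++ C.
pose sg (i : 'I_(m + n)) : int := if (i < m)%N then 1 else -1.
pose sG x y := \sum_(i < m + n) (if (x \in G i) && (y \in G i) then sg i else 0).
have sG_one : forall i x y, x \in G i -> y \in G i -> sG x y = sg i.
  move=> i x y xi yi; rewrite /sG (bigD1 i) //= xi yi big1 ?addr0 // => j ji.
  case: ifP => // /andP[xj _]; by rewrite (Guniq _ _ _ xj xi) eqxx in ji.
have sG_zero : forall x y, (forall i, ~~ ((x \in G i) && (y \in G i))) -> sG x y = 0.
  by move=> x y h; rewrite /sG big1 // => i _; rewrite (negbTE (h i)).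
have lamC_out : forall S : {set T}, ~~ (S \subset U) -> lam C S = 0%N.
  move=> S SU; rewrite /lam (@eq_in_count _ _ pred0) ?count_pred0 // => X XC /=.
  apply/negbTE; apply: contra SU => SX; exact: subset_trans SX (hCs X XC).1.
have lamA_UU : forall x y, x \in U -> y \in U -> x != y -> lam A [set x; y] = 0%N.
  move=> x y xU yU xy; rewrite hA // xU yU /=.
  suff -> : [exists i : 'I_(m + n), ([set x; y] == G i) && (i < m)%N] = false by [].
  apply/existsP => -[i /andP[/eqP e _]].
  have : x \in G i by rewrite -e !inE eqxx.
  by move/GnU; rewrite xU.
have lamB_UU : forall x y, x \in U -> y \in U -> x != y -> lam B [set x; y] = 0%N.
  move=> x y xU yU xy; rewrite /lam (@eq_in_count _ _ pred0) ?count_pred0 // => X XB /=.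
  apply/negbTE/negP => sub; have [_ h1] := B3 X XB.
  have : [set x; y] \subset X :&: U.
    by rewrite subsetI sub !subUset !sub1set xU yU.
  move/subset_leq_card; rewrite cards2 xy; lia.
have lamF_pair : forall x y, x != y ->
   (lam F [set x; y])%:Z - lam0%:Z =
   if (x \in U) && (y \in U) then (lam C [set x; y])%:Z - lam0%:Z else sG x y.
  move=> x y xy; rewrite /F !lam_cat.
  case: ifP => hxy.
    case/andP: hxy => xU yU; rewrite lamA_UU // lamB_UU //.
  rewrite lamC_out; last by rewrite !subUset !sub1set hxy.
  rewrite hB //; last by rewrite hxy.
  rewrite hA // hxy /=.
  case: (boolP [exists i, (x \in G i) && (y \in G i)]) => [/existsP[i /andP[xi yi]] | hne].
    rewrite (sG_one i) // /sg.
    have E : forall j, ([set x; y] == G j) = (j == i).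
      move=> j; rewrite pairG //; apply/idP/eqP => [/andP[xj _]|->]; last by rewrite xi yi.
      exact: Guniq xj xi.
    case: (ltnP i m) => im.
      have -> : [exists i0 : 'I_(m + n), ([set x; y] == G i0) && (i0 < m)%N].
        by apply/existsP; exists i; rewrite E eqxx.
      lia.
    have -> : [exists i0 : 'I_(m + n), ([set x; y] == G i0) && (i0 < m)%N] = false.
      by apply/existsP => -[j]; rewrite E => /andP[/eqP -> ]; rewrite ltnNge im.
    have -> : [exists i0 : 'I_(m + n), ([set x; y] == G i0) && (m <= i0)%N].
      by apply/existsP; exists i; rewrite E eqxx.
    lia.
  have hne' : forall j, ~~ ((x \in G j) && (y \in G j)).
    by move=> j; apply: contra hne => h; apply/existsP; exists j.
  rewrite sG_zero //.
  have -> : [exists i0 : 'I_(m + n), ([set x; y] == G i0) && (i0 < m)%N] = false.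
    by apply/existsP => -[j]; rewrite pairG // => /andP[h _]; move: (hne' j); rewrite h.
  have -> : [exists i0 : 'I_(m + n), ([set x; y] == G i0) && (m <= i0)%N] = false.
    by apply/existsP => -[j]; rewrite pairG // => /andP[h _]; move: (hne' j); rewrite h.
  lia.
have F3 : forall X, X \in F -> X \subset [set: T] /\ #|X| = 3%N.
  move=> X; rewrite /F !mem_cat subsetT => /orP[/A3 //|/orP[/B3[] //|/hCs[] //]].
have [S0 [S0U S03 S0C]] : exists S0 : {set T}, [/\ S0 \subset U, #|S0| = 3%N & S0 \notin C].
  case: (boolP [exists S0 : {set T}, [&& S0 \subset U, #|S0| == 3%N & S0 \notin C]]).
    by case/existsP => S0 /and3P[? /eqP ? ?]; exists S0.
  move=> hne; exfalso.
  have sub : [set S : {set T} | S \subset U & #|S| == 3%N] \subset C.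
    apply/subsetP => S; rewrite inE => /andP[SU S3].
    by apply: contraR hne => SC; apply/existsP; exists S; rewrite SU S3 SC.
  move: (subset_leq_card sub) (card_size C); rewrite cards_draws hU hCsz; move=> h1 h2; by have := leq_trans h1 h2; rewrite leqNgt hcu.
have lamC_S0 : lam C S0 = 0%N.
  rewrite /lam (@eq_in_count _ _ pred0) ?count_pred0 // => X XC /=.
  apply/negbTE/negP => sub; have [_ X3] := hCs X XC.
  have : S0 == X by rewrite eqEcard sub X3 S03.
  by move/eqP => e; rewrite e XC in S0C.
have bal : forall S : {set T}, #|S| = 3%N -> (lam F S <= 1)%N.
  move=> S S3; rewrite /F catA lam_cat.
  case: (boolP (S \subset U)) => SU.
    have [x xS] : exists x, x \in S by apply/set0Pn; rewrite -card_gt0 S3.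
    have [y yS] : exists y, y \in S :\ x by apply/set0Pn; rewrite -card_gt0 -(leq_add2l (x \in S)) -cardsD1 xS S3.
    move: yS; rewrite !inE => /andP[yx yS].
    have xU : x \in U by exact: (subsetP SU).
    have yU : y \in U by exact: (subsetP SU).
    have h1 : (lam (A ++ B) S <= lam (A ++ B) [set y; x])%N.
      by apply: lam_mono; rewrite !subUset !sub1set xS yS.
    rewrite !lam_cat (lamA_UU y x) // (lamB_UU y x) // in h1.
    have h2 := hbal S S0 SU S0U S3 S03; rewrite lamC_S0 add0n in h2.
    by rewrite lam_cat; move: h1; rewrite addn0 leqn0 => /eqP ->.
  rewrite lamC_out // addn0; apply: lam_le1 => //.
    rewrite cat_uniq uA uB andbT /=; apply/hasPn => X XB; apply/negP => XA.
    by move: (hAB X XA); rewrite XB.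
  by move=> X; rewrite mem_cat => /orP[/A3 //|/B3[]].
have mulnZ : forall a K : nat, a%:Z *+ K = (a * K)%:Z.
  by move=> a K; rewrite PoszM -[K%:Z]natz mulr_natr.
have sumZ : forall (P : pred {set T}) (f : {set T} -> nat),
    (\sum_(p | P p) f p)%N%:Z = \sum_(p | P p) (f p)%:Z.
  by move=> P f; rewrite (big_morph Posz PoszD (erefl _)).
pose S2 (P : {set T}) := [set p : {set T} | (p \subset P) && (#|p| == 2%N)].
have dpair : forall P p, p \in S2 P -> exists x y, x != y /\ p = [set x; y].
  by move=> P p; rewrite inE => /andP[_ /cards2P[x [y [xy ->]]]]; exists x, y.
have hdsum : \sum_(p in S2 [set: T]) ((lam F p)%:Z - lam0%:Z) = m%:Z - n%:Z + delta.
  rewrite (bigID (fun p : {set T} => p \subset U)) /= addrC.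
  have -> : \sum_(p in S2 [set: T] | p \subset U) ((lam F p)%:Z - lam0%:Z) = delta.
    rewrite (eq_bigl (fun p => p \in S2 U)) => [|p]; last by rewrite !inE subsetT andbC.
    rewrite (eq_bigr (fun p => (lam C p)%:Z - lam0%:Z)); last first.
      move=> p pS; have [x [y [xy ep]]] := dpair U p pS; subst p.
      move: pS; rewrite inE !subUset !sub1set => /andP[/andP[xU yU] _].
      by rewrite lamF_pair // xU yU.
    rewrite sumrB -sumZ (@dcount T U C hCs) sumr_const mulnZ.
    rewrite (cards_draws U 2%N) hU hCsz h3c; lia.
  congr (_ + _).
  rewrite (eq_bigr (fun p => \sum_(i < m + n) (if p == G i then sg i else 0))); last first.
    move=> p /andP[pS pU]; have [x [y [xy ep]]] := dpair _ p pS; subst p.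
    rewrite lamF_pair // ifF; last first.
      by apply: negbTE; apply: contra pU => /andP[xU yU]; rewrite !subUset !sub1set xU yU.
    by apply: eq_bigr => i _; rewrite pairG.
  rewrite exchange_big /=.
  rewrite (eq_bigr (fun i => sg i)) => [|i _]; last first.
    rewrite (bigD1 (G i)) /=; last first.
      rewrite inE subsetT hG2 /=.
      have [x xi] : exists x, x \in G i by apply/set0Pn; rewrite -card_gt0 hG2.
      by apply/negP => /subsetP /(_ x xi); apply/negP; exact: GnU xi.
    rewrite eqxx big1 ?addr0 // => p /andP[_ /negbTE ->] //.
  rewrite big_split_ord /=.
  rewrite (eq_bigr (fun _ => 1)) => [|i _]; last by rewrite /sg /= ltn_ord.
  rewrite [X in _ + X](eq_bigr (fun _ => -1)) => [|i _]; last by rewrite /sg /= ltnNge leq_addr.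
  by rewrite !sumr_const !card_ord mulNrn !natz.
have hcount : (3 * size F)%:Z = (lam0 * 'C(#|T|, 2))%:Z + (m%:Z - n%:Z + delta).
  rewrite -(@dcount T [set: T] F F3) sumZ.
  rewrite (eq_bigr (fun p => lam0%:Z + ((lam F p)%:Z - lam0%:Z))); last by move=> p _; rewrite addrC subrK.
  rewrite big_split /= sumr_const -/(S2 [set: T]) hdsum mulnZ.
  by rewrite (cards_draws [set: T] 2%N) cardsT.
have hu2 : (u %% 2 = 0)%N by rewrite modn2; case: (odd u) hue.
have isoT : forall k, defect_iso U C lam0 k delta ->
    defect_iso [set: T] F lam0 k (m%:Z - n%:Z + delta).
  move=> k [hwf [fC [fCinj hfC]]].
  rewrite hU in hwf.
  have eH : Hlab k #|U| delta = Hlab k u delta by rewrite hU.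
  rewrite eH in hfC.
  have [P [hP htu]] := hwf_P _ _ _ hwf.
  have hfx : forall x, (fC x < u)%N by move=> x; rewrite -hU; exact: ltn_ord.
  pose base := bs (tk k P) u m.
  pose s := sh (tk k P) m.
  pose b (x : T) (i : 'I_(m + n)) := (Some x != [pick z in G i]).
  pose g (x : T) : nat := if [pick i | x \in G i] is Some i then (base i + b x i)%N else s (fC x).
  have gU : forall x, x \in U -> g x = s (fC x).
    move=> x xU; rewrite /g; case: pickP => [i xi|//].
    by move: (GnU i x xi); rewrite xU.
  have gG : forall i x, x \in G i -> g x = (base i + b x i)%N.
    move=> i x xi; rewrite /g; case: pickP => [j xj|hn]; last by move: (hn i); rewrite xi.
    by rewrite (Guniq _ _ _ xj xi).
  have bdiff : forall i x y, x \in G i -> y \in G i -> x != y -> b x i = ~~ b y i.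
    move=> i x y xi yi xy; rewrite /b; case: pickP => [z zi|hn]; last by move: (hn x); rewrite xi.
    have eS : forall w, (Some w == Some z) = (w == z) by move=> w; apply/eqP/eqP => [[]|->].
    rewrite !eS.
    have [exz|xz] := eqVneq x z; have [eyz|yz] := eqVneq y z.
    - by rewrite exz eyz eqxx in xy.
    - by subst x.
    - by subst y.
    - by move: xy; rewrite (@two_elems _ _ _ _ _ (hG2 i) xi yi zi xz yz) eqxx.
  have glt : forall x, (g x < u + 2 * (m + n))%N.
    move=> x; case: (boolP (x \in U)) => xU.
      by rewrite gU //; exact: lt_U (hfx x).
    have [i xi] := Gcov x xU; rewrite (gG i x xi).
    exact: lt_G htu (ltn_ord i).
  have h0 : (0 < #|[set: T]|)%N by rewrite cardsT hT; lia.
  pose f (x : T) : 'I_#|[set: T]| := insubd (Ordinal h0) (g x).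
  have fval : forall x, val (f x) = g x.
    by move=> x; have := glt x; rewrite -hT -cardsT => h; rewrite /f val_insubd h.
  split; first by rewrite cardsT hT; exact: hwf_T.
  exists f; split.
    move=> x y _ _ /(congr1 val); rewrite !fval => e.
    case: (boolP (x \in U)) => xU; case: (boolP (y \in U)) => yU.
    - apply: (fCinj x y xU yU); apply: ord_inj; rewrite !gU // in e.
      exact: inj_UU e.
    - have [i yi] := Gcov y yU; rewrite gU // (gG i y yi) in e.
      by case: (@inj_UG _ _ _ _ _ _ _ htu (hfx x) (ltn_ord i) e).
    - have [i xi] := Gcov x xU; rewrite (gU y) // (gG i x xi) in e.
      by case: (@inj_UG _ _ _ _ _ _ _ htu (hfx y) (ltn_ord i) (esym e)).
    - have [i xi] := Gcov x xU; have [j yj] := Gcov y yU.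
      rewrite (gG i x xi) (gG j y yj) in e.
      have ij : i = j.
        exact: ord_inj (@inj_GG _ _ _ _ _ _ _ _ htu (ltn_ord i) (ltn_ord j) e).
      subst j; case: (eqVneq x y) => // xy; move: e.
      by rewrite (bdiff i x y xi yj xy) => /addnI; case: (b y i).
  move=> x y _ _ xy; rewrite !fval cardsT hT lamF_pair //.
  case: (boolP (x \in U)) => xU; case: (boolP (y \in U)) => yU.
  - by rewrite /= !gU // /s /sh Hlab_shift // hfC.
  - have [i yi] := Gcov y yU.
    rewrite /= sG_zero; last by move=> j; rewrite (negbTE (contraL (GnU j x) xU)).
    by rewrite gU // (gG i y yi) /s /base /sh /bs Hlab_UG.
  - have [i xi] := Gcov x xU.
    rewrite /= sG_zero; last by move=> j; rewrite (negbTE (contraL (GnU j y) yU)) andbF.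
    by rewrite Hlab_sym (gU y) // (gG i x xi) /s /base /sh /bs Hlab_UG.
  - have [i xi] := Gcov x xU; have [j yj] := Gcov y yU.
    rewrite /= (gG i x xi) (gG j y yj).
    case: (eqVneq i j) => [eij|ij].
      subst j; rewrite (sG_one i) // (bdiff i x y xi yj xy) /sg.
      case: (b y i) => /=; last by rewrite Hlab_sym /base /bs Hlab_GG.
      by rewrite /base /bs Hlab_GG.
    rewrite sG_zero; last first.
      move=> l; apply/negP => /andP[xl yl].
      by move: ij; rewrite -(Guniq _ _ _ xl xi) -(Guniq _ _ _ yl yj) eqxx.
    rewrite /base /bs Hlab_GG' //.
    by move=> e; move: ij; rewrite (ord_inj e) eqxx.
have hcond : ((m%:Z - n%:Z + delta) == (#|[set: T]|./2)%:Z %[mod 2])%Z =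
             (delta == (#|U|./2)%:Z %[mod 2])%Z.
  rewrite cardsT hT hU; apply/idP/idP => ?; lia.
have hisoT : if ((m%:Z - n%:Z + delta) == (#|[set: T]|./2)%:Z %[mod 2])%Z
    then defect_iso [set: T] F lam0 0 (m%:Z - n%:Z + delta)
    else defect_iso [set: T] F lam0 1 (m%:Z - n%:Z + delta) \/
         defect_iso [set: T] F lam0 2 (m%:Z - n%:Z + delta).
  rewrite hcond; case: ifP hiso' => _; first exact: isoT.
  by case=> h; [left|right]; exact: isoT.
have [k [_ [f [_ hf]]]] : exists k, defect_iso [set: T] F lam0 k (m%:Z - n%:Z + delta).
  by move: hisoT; case: ifP => _; [exists 0%N | case => h; eexists; exact h].
split; last by rewrite -/F hcount !addrA.
split.
  split; first by rewrite cardsT hT; lia.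
  exact: F3.
split; first by [].
split; last by move=> S1 S2' _ _ h1 _; exact: leq_trans (bal S1 h1) (leq_addl _ _).
exists lam0, (m%:Z - n%:Z + delta).
split.
  split; first by rewrite cardsT hT oddD (negbTE hue) oddM.
  split; first exact: hlo.
  split; first by rewrite cardsT; exact: hcount.
  by rewrite cardsT hT; lia.
split; last exact: hisoT.
move=> x y _ _ xy; rewrite -/F; have := hf x y (in_setT x) (in_setT y) xy.
by case: (Hlab_range k #|[set: T]| (m%:Z - n%:Z + delta) (f x) (f y)) => [->|[->|->]]; lia.
Qed.
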